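(* Let $G$ be a graph with $G = G_1\square G_2$ for graphs $G_1,G_2$. Then $G$ is regular $K_3$-regular if and only if both $G_1$ and $G_2$ are regular $K_3$-regular.
   Context: All graphs are finite, simple and undirected. The $K_3$-degree of a vertex $v$ is the number of triangles containing $v$. A graph is regular $K_3$-regular if all its vertices have the same degree and all its vertices have the same $K_3$-degree. The Cartesian product $G_1\square G_2$ has vertex set $V(G_1)\times V(G_2)$, with $(u,v)$ and $(u',v')$ adjacent iff either $u=u'$ and $vv'\in E(G_2)$, or $v=v'$ and $uu'\in E(G_1)$. *)

(* Defs.v *)
From mathcomp Require Import all_boot.
Set Implicit Arguments. Unset Strict Implicit. Unset Printing Implicit Defensive.

Definition simple_graph (T : finType) (e : rel T) : Prop :=
  symmetric e /\ irreflexive e.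

Definition deg (T : finType) (e : rel T) (v : T) : nat := #|[set w | e v w]|.

Definition is_triangle (T : finType) (e : rel T) (S : {set T}) : bool :=
  (#|S| == 3) && [forall x in S, forall y in S, (x != y) ==> e x y].

Definition k3deg (T : finType) (e : rel T) (v : T) : nat :=
  #|[set S : {set T} | is_triangle e S && (v \in S)]|.

Definition reg_K3reg (T : finType) (e : rel T) : Prop :=
  (exists k, forall v, deg e v = k) /\ (exists t, forall v, k3deg e v = t).

Definition cartprod (T1 T2 : finType) (e1 : rel T1) (e2 : rel T2) : rel (T1 * T2) :=
  fun p q => ((p.1 == q.1) && e2 p.2 q.2) || ((p.2 == q.2) && e1 p.1 q.1).

(* Main.v *)
Require Import Defs.
From mathcomp Require Import all_boot.

Lemma mem_im1 (T1 T2 : finType) (v : T2) (A : {set T1}) (a : T1) (b : T2) :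
  ((a, b) \in [set (x, v) | x in A]) = (b == v) && (a \in A).
Proof.
apply/imsetP/andP => [[a' Ha' [-> ->]] | [/eqP -> Ha]]; first by rewrite eqxx.
by exists a.
Qed.

Lemma mem_im2 (T1 T2 : finType) (u : T1) (A : {set T2}) (a : T1) (b : T2) :
  ((a, b) \in [set (u, x) | x in A]) = (a == u) && (b \in A).
Proof.
apply/imsetP/andP => [[b' Hb' [-> ->]] | [/eqP -> Hb]]; first by rewrite eqxx.
by exists b.
Qed.

Lemma deg_cart (T1 T2 : finType) (e1 : rel T1) (e2 : rel T2)
  (g1 : simple_graph e1) (g2 : simple_graph e2) u v :
  deg (cartprod e1 e2) (u, v) = deg e1 u + deg e2 v.
Proof.
rewrite /deg.
have -> : [set w | cartprod e1 e2 (u, v) w] =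
  [set (a, v) | a in [set a | e1 u a]] :|: [set (u, b) | b in [set b | e2 v b]].
  apply/setP => -[a b]; rewrite !inE mem_im1 mem_im2 !inE /cartprod /=.
  by rewrite orbC (eq_sym a) (eq_sym b).
rewrite cardsU !card_imset; try by move=> x y [].
suff -> : [set (a, v) | a in [set a | e1 u a]] :&: [set (u, b) | b in [set b | e2 v b]] = set0.
  by rewrite cards0 subn0.
apply/setP => -[a b]; rewrite !inE mem_im1 mem_im2 !inE.
apply/negP => /andP [/andP [_ H1] /andP [/eqP Hu _]].
by move: H1; rewrite Hu (snd g1).
Qed.

Lemma tri_im1 (T1 T2 : finType) (e1 : rel T1) (e2 : rel T2) v (S : {set T1}) :
  is_triangle e1 S -> is_triangle (cartprod e1 e2) [set (a, v) | a in S].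
Proof.
move=> /andP [c3 /forallP H]; apply/andP; split.
  by rewrite card_imset // => x y [].
apply/forallP => x; apply/implyP => /imsetP [a Ha ->].
apply/forallP => y; apply/implyP => /imsetP [b Hb ->]; apply/implyP => neq.
have := H a; rewrite Ha /= => /forallP /(_ b); rewrite Hb /= => /implyP H'.
rewrite /cartprod /= eqxx H' ?orbT //.
by apply: contraNneq neq => ->.
Qed.

Lemma tri_im2 (T1 T2 : finType) (e1 : rel T1) (e2 : rel T2) u (S : {set T2}) :
  is_triangle e2 S -> is_triangle (cartprod e1 e2) [set (u, b) | b in S].
Proof.
move=> /andP [c3 /forallP H]; apply/andP; split.
  by rewrite card_imset // => x y [].
apply/forallP => x; apply/implyP => /imsetP [a Ha ->].
apply/forallP => y; apply/implyP => /imsetP [b Hb ->]; apply/implyP => neq.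
have := H a; rewrite Ha /= => /forallP /(_ b); rewrite Hb /= => /implyP H'.
rewrite /cartprod /= eqxx H' ?orbT //.
by apply: contraNneq neq => ->.
Qed.

Lemma k3_cart (T1 T2 : finType) (e1 : rel T1) (e2 : rel T2)
  (g1 : simple_graph e1) (g2 : simple_graph e2) u v :
  k3deg (cartprod e1 e2) (u, v) = k3deg e1 u + k3deg e2 v.
Proof.
rewrite /k3deg.
set A1 := [set S | is_triangle e1 S && (u \in S)].
set A2 := [set S | is_triangle e2 S && (v \in S)].
set F1 := fun S : {set T1} => [set (a, v) | a in S].
set F2 := fun S : {set T2} => [set (u, b) | b in S].
have iF1 : injective F1 by apply: imset_inj => x y [].
have iF2 : injective F2 by apply: imset_inj => x y [].
have -> : [set S | is_triangle (cartprod e1 e2) S && ((u, v) \in S)] =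
   F1 @: A1 :|: F2 @: A2.
  apply/setP => S; rewrite !inE; apply/idP/idP.
  - move=> /andP [tS uvS].
    have adj : forall x y, x \in S -> y \in S -> x != y -> cartprod e1 e2 x y.
      move: tS => /andP [_ /forallP H] x y xS yS nxy.
      by have := H x; rewrite xS /= => /forallP /(_ y); rewrite yS /= => /implyP; apply.
    have c3 : #|S| = 3 by case/andP: tS => /eqP.
    have [all2|] := boolP [forall x in S, x.2 == v].
    + apply/orP; left; apply/imsetP; exists (fst @: S).
        rewrite inE; apply/andP; split; last by apply/imsetP; exists (u, v).
        apply/andP; split.
          rewrite card_in_imset ?c3 // => -[x1 x2] [y1 y2] xS yS /= E.
          have := forall_inP all2 _ xS; have := forall_inP all2 _ yS.
          by rewrite /= => /eqP -> /eqP ->; rewrite E.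
        apply/forallP => a; apply/implyP => /imsetP [[x1 x2] xS ->].
        apply/forallP => b; apply/implyP => /imsetP [[y1 y2] yS ->] /=.
        apply/implyP => nab.
        have := adj _ _ xS yS; rewrite /cartprod /= (negbTE nab) /=.
        have := forall_inP all2 _ xS; have := forall_inP all2 _ yS.
        rewrite /= => /eqP -> /eqP -> ; rewrite eqxx /=; apply.
        by apply: contraNneq nab => -[->].
      apply/setP => -[x1 x2]; rewrite mem_im1; apply/idP/andP.
        move=> xS; have := forall_inP all2 _ xS; rewrite /= => ->; split => //.
        by apply/imsetP; exists (x1, x2).
      case=> /eqP -> /imsetP [[y1 y2] yS /= ->].
      by have := forall_inP all2 _ yS; rewrite /= => /eqP <-.
    + move=> /forall_inPn [[x1 x2] xS /= nx2].
      have all1 : [forall y in S, y.1 == u].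
        apply/forall_inP => -[y1 y2] yS /=; apply/negPn/negP => ny1.
        have nx : (u,v) != (x1,x2) by apply: contraNneq nx2 => -[_ <-].
        have ny : (u,v) != (y1,y2) by apply: contraNneq ny1 => -[<-].
        move: (adj _ _ uvS xS nx) (adj _ _ uvS yS ny).
        rewrite /cartprod /= (eq_sym v x2) (negbTE nx2) /= (eq_sym u y1) (negbTE ny1) /= orbF.
        move=> /andP [/eqP ex1 _] /andP [/eqP ey2 _]; subst x1 y2.
        have nxy : (u,x2) != (y1,v) by apply: contraNneq nx2 => -[_ ->].
        move: (adj _ _ xS yS nxy); rewrite /cartprod /= (eq_sym u y1) (negbTE nx2) (negbTE ny1).
        by [].
      apply/orP; right; apply/imsetP; exists (snd @: S).
        rewrite inE; apply/andP; split; last by apply/imsetP; exists (u, v).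
        apply/andP; split.
          rewrite card_in_imset ?c3 // => -[x1' x2'] [y1 y2] xS' yS /= E.
          have := forall_inP all1 _ xS'; have := forall_inP all1 _ yS.
          by rewrite /= => /eqP -> /eqP ->; rewrite E.
        apply/forallP => a; apply/implyP => /imsetP [[z1 z2] zS ->].
        apply/forallP => b; apply/implyP => /imsetP [[y1 y2] yS ->] /=.
        apply/implyP => nab.
        have := adj _ _ zS yS; rewrite /cartprod /= (negbTE nab) orbF.
        have := forall_inP all1 _ zS; have := forall_inP all1 _ yS.
        rewrite /= => /eqP -> /eqP -> ; rewrite eqxx /=; apply.
        by apply: contraNneq nab => -[->].
      apply/setP => -[z1 z2]; rewrite mem_im2; apply/idP/andP.
        move=> zS; have := forall_inP all1 _ zS; rewrite /= => ->; split => //.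
        by apply/imsetP; exists (z1, z2).
      case=> /eqP -> /imsetP [[y1 y2] yS /= ->].
      by have := forall_inP all1 _ yS; rewrite /= => /eqP <-.
  - case/orP => /imsetP [S' ]; rewrite inE => /andP [tS' uS'] ->.
      by rewrite tri_im1 //= mem_im1 eqxx.
    by rewrite tri_im2 //= mem_im2 eqxx.
rewrite cardsU !card_imset //.
suff -> : F1 @: A1 :&: F2 @: A2 = set0 by rewrite cards0 subn0.
apply/setP => S; rewrite !inE; apply/negP => /andP [/imsetP [S1 H1 E1] /imsetP [S2 _ E2]].
move: H1; rewrite inE => /andP [/andP [/eqP c3 _] _].
have : #|S| <= 1.
  rewrite -(cards1 (u, v)); apply: subset_leq_card; apply/subsetP => -[a b] H.
  have := H; rewrite {1}E1 mem_im1 => /andP [/eqP -> _].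
  by move: H; rewrite E2 mem_im2 => /andP [/eqP -> _]; rewrite inE.
by rewrite E1 card_imset ?c3 // => x y [].
Qed.

Theorem theorem4p2 (T1 T2 : finType) (e1 : rel T1) (e2 : rel T2)
  (hT1 : 0 < #|T1|) (hT2 : 0 < #|T2|)
  (g1 : simple_graph e1) (g2 : simple_graph e2) :
  reg_K3reg (cartprod e1 e2) <-> reg_K3reg e1 /\ reg_K3reg e2.
Proof.
have [u0 _] := card_gt0P hT1.
have [v0 _] := card_gt0P hT2.
split.
- move=> [[k Hk] [t Ht]]; split; split.
  + exists (k - deg e2 v0) => u. by rewrite -(Hk (u, v0)) deg_cart // addnK.
  + exists (t - k3deg e2 v0) => u. by rewrite -(Ht (u, v0)) k3_cart // addnK.
  + exists (k - deg e1 u0) => v. by rewrite -(Hk (u0, v)) deg_cart // addKn.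
  + exists (t - k3deg e1 u0) => v. by rewrite -(Ht (u0, v)) k3_cart // addKn.
- move=> [[[k1 H1] [t1 T1']] [[k2 H2] [t2 T2']]]; split.
  + by exists (k1 + k2) => -[u v]; rewrite deg_cart // H1 H2.
  + by exists (t1 + t2) => -[u v]; rewrite k3_cart // T1' T2'.
Qed.
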